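(* Let $k\ge1$ and let $x,y$ be integer sequences of length $k$ with identical second-order cyclic statistics, i.e. $S_{i_1,i_2}(x)=S_{i_1,i_2}(y)$ for all indices $i_1,i_2$. Then for each $\alpha\in[k]$, either (1) $\hat{x}_j\neq 0$ and $\hat{y}_j\neq 0$ for all $j\in G_\alpha$, or (2) $\hat{x}_j=\hat{y}_j=0$ for all $j\in G_\alpha$.
   Context: Sequences are indexed modulo $k$. The cyclic statistic is $S_{i_1,\dots,i_m}(x)=\sum_{j=1}^{k} x_{i_1+j}\cdots x_{i_m+j}$ (indices mod $k$). The Fourier transform is $\hat{x}_j=\sum_{\ell=0}^{k-1}x_\ell e^{2\pi i j\ell/k}$ (indices mod $k$). $[k]=\{1,\dots,k\}$ and $G_\alpha=\{j\in[k]:\gcd(j,k)=\alpha\}$. *)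

(* Defs.v *)
From HB Require Import structures.
From mathcomp Require Import all_boot all_order all_algebra.
From mathcomp Require Import complex.
From mathcomp Require Import reals trigo.
Set Implicit Arguments. Unset Strict Implicit. Unset Printing Implicit Defensive.
Import Order.TTheory GRing.Theory Num.Theory.
Local Open Scope ring_scope.
Local Open Scope complex_scope.

Definition xat (x : seq int) (n : nat) : int := x`_(n %% size x).

Definition S2 (x : seq int) (i1 i2 : nat) : int :=
  \sum_(1 <= j < (size x).+1) xat x (i1 + j) * xat x (i2 + j).

Definition omega (R : realType) (k : nat) : R[i] :=
  (cos (2 * pi / k%:R) +i* sin (2 * pi / k%:R))%C.

Definition fourier (R : realType) (x : seq int) (j : nat) : R[i] :=
  \sum_(l < size x) ((xat x l)%:~R) * (omega R (size x)) ^+ (j * l).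

Definition Galpha (k alpha : nat) : seq nat :=
  [seq j <- iota 1 k | gcdn j k == alpha].

(* Main.v *)
Require Import Defs.
From HB Require Import structures.
From mathcomp Require Import all_boot all_order all_algebra all_field.
From mathcomp Require Import complex.
From mathcomp Require Import reals trigo.
From mathcomp Require Import ring.
Import Order.TTheory GRing.Theory Num.Theory.
Local Open Scope ring_scope.

Lemma Phi_root (F : idomainType) n (w : F) :
  n.-primitive_root w -> root (map_poly intr 'Phi_n) w.
Proof.
move=> pw; have n_gt0 := prim_order_gt0 pw.
have := congr1 (fun p : {poly int} => (map_poly intr p : {poly F}).[w]) (prod_Cyclotomic n_gt0).
rewrite /= rmorph_prod /= horner_prod rmorphB rmorph1 /= map_polyXn !hornerE.
rewrite (prim_expr_order pw) subrr => /eqP; rewrite prodf_seq_eq0 => /hasP[d].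
move=> dd /eqP Pd; have ddn : (d %| n)%N by rewrite dvdn_divisors.
have [edn|ndn] := eqVneq d n; first by rewrite -edn; exact/eqP.
have d_gt0 : (0 < d)%N by apply: dvdn_gt0 ddn.
have : root (map_poly intr ('X^d - 1) : {poly F}) w.
  rewrite -(prod_Cyclotomic d_gt0) rmorph_prod /= /root horner_prod.
  rewrite (bigD1_seq d) ?divisors_uniq -?dvdn_divisors //= Pd mul0r //.
rewrite rmorphB rmorph1 /= map_polyXn /root !hornerE subr_eq0.
rewrite -(prim_order_dvd pw) => /(dvdn_leq d_gt0) dlen.
by move: (dvdn_leq n_gt0 ddn) ndn dlen => /= a b c; rewrite eqn_leq a c in b.
Qed.

Local Notation pZtoQ := (map_poly (intr : int -> rat)).

Lemma mapZQ (F : numFieldType) (P : {poly int}) :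
  map_poly (ratr : rat -> F) (pZtoQ P) = map_poly intr P.
Proof. by rewrite -map_poly_comp; apply: eq_map_poly => a /=; rewrite ratr_int. Qed.

Lemma Phi_dvd (F : numFieldType) n (w : F) (P : {poly int}) :
  n.-primitive_root w -> root (map_poly intr P) w -> pZtoQ 'Phi_n %| pZtoQ P.
Proof.
move=> pw Pw; have n_gt0 := prim_order_gt0 pw.
set g := gcdp (pZtoQ 'Phi_n) (pZtoQ P).
have gw : root (map_poly (ratr : rat -> F) g) w.
  by rewrite gcdp_map root_gcd !mapZQ Pw Phi_root.
have Phi0 : pZtoQ 'Phi_n != 0.
  by rewrite -size_poly_eq0 size_map_inj_poly ?size_poly_eq0 ?monic_neq0 ?Cyclotomic_monic //; apply: intr_inj.
have g0 : g != 0 by rewrite gcdp_eq0 negb_and Phi0.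
have : (1 < size (map_poly (ratr : rat -> F) g))%N.
  by apply: root_size_gt1 gw; rewrite map_poly_eq0.
rewrite size_map_poly => sg.
have : size (map_poly (ratr : rat -> algC) g) != 1%N by rewrite size_map_poly gtn_eqF.
case/closed_rootP => z gz.
have [z0 pz0] := C_prim_root_exists n_gt0.
have pz : n.-primitive_root z.
  have : root (map_poly (ratr : rat -> algC) (pZtoQ 'Phi_n)) z.
    have /dvdpP[q ->] : g %| pZtoQ 'Phi_n by apply: dvdp_gcdl.
    by rewrite rmorphM /= rootM gz orbT.
  by rewrite mapZQ (Cintr_Cyclotomic pz0) root_cyclotomic.
have [p [Dp _] dvp] := minCpolyP z.
have ep : p = pZtoQ 'Phi_n.
  apply: (map_inj_poly (fmorph_inj (ratr : {rmorphism rat -> algC})) (rmorph0 _)).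
  have e1 := mapZQ algC (Cyclotomic n); rewrite (minCpoly_cyclotomic pz) -(Cintr_Cyclotomic pz) in Dp.
  exact: (etrans (esym Dp) (esym e1)).
have h : pZtoQ 'Phi_n %| g by rewrite -ep -dvp.
by apply: (dvdp_trans h); apply: dvdp_gcdr.
Qed.

Lemma conj_roots (F : numFieldType) m (z : F) (P : {poly int}) u v :
  (0 < m)%N -> z ^+ m = 1 -> coprime u m -> coprime v m ->
  root (map_poly intr P) (z ^+ u) -> root (map_poly intr P) (z ^+ v).
Proof.
move=> m_gt0 zm cu cv Pu.
have [d pz dm] := prim_order_exists m_gt0 zm.
have cop w : coprime w m -> coprime w d.
  by move=> cw; apply: coprime_dvdr dm cw.
have pu : d.-primitive_root (z ^+ u) by rewrite prim_root_exp_coprime // cop.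
have pv : d.-primitive_root (z ^+ v) by rewrite prim_root_exp_coprime // cop.
have /dvdpP[q Dq] := @Phi_dvd F d _ P pu Pu.
have := congr1 (map_poly (ratr : rat -> F)) Dq.
rewrite rmorphM /= !mapZQ => ->.
by rewrite rootM (@Phi_root F d) ?orbT.
Qed.

Lemma rot_sum (V : nmodType) k s (G : nat -> V) : (0 < k)%N ->
  \sum_(l < k) G l = \sum_(d < k) G ((d + s) %% k)%N.
Proof.
move=> k0.
pose f (d : 'I_k) := Ordinal (ltn_pmod (d + s) k0).
have injf : injective f.
  move=> a b /(congr1 val) /= /eqP; rewrite eqn_modDr !modn_small // => /eqP ab.
  exact: val_inj.
by rewrite (reindex_inj injf).
Qed.

Lemma xat_mod x n : xat x (n %% size x) = xat x n.
Proof. by rewrite /xat modn_mod. Qed.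

Lemma S2_rot x d : (0 < size x)%N ->
  S2 x d 0 = \sum_(m < size x) xat x (d + m) * xat x m.
Proof.
move=> k0; rewrite /S2 big_add1 /= big_mkord.
rewrite (rot_sum _ _ 1 (fun m => xat x (d + m) * xat x m)) //.
apply: eq_bigr => i _; rewrite add0n.
by rewrite xat_mod -(xat_mod x (d + (_ %% _))) modnDmr xat_mod addn1.
Qed.

Lemma prod_corr (F : comNzRingType) (x : seq int) (w : F) :
  (0 < size x)%N -> w ^+ size x = 1 ->
  (\sum_(l < size x) (xat x l)%:~R * w ^+ l) *
  (\sum_(m < size x) (xat x m)%:~R * w ^+ ((size x).-1 * m)) =
  \sum_(d < size x) (S2 x d 0)%:~R * w ^+ d.
Proof.
set k := size x => k0 wk.
rewrite mulrC big_distrl /=.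
have step m : (m < k)%N ->
  (xat x m)%:~R * w ^+ (k.-1 * m) * (\sum_(l < k) (xat x l)%:~R * w ^+ l) =
  \sum_(d < k) ((xat x (d + m) * xat x m)%:~R * w ^+ d).
  move=> mk; rewrite mulrC big_distrl /=.
  rewrite (rot_sum _ _ m (fun l => (xat x l)%:~R * w ^+ l * ((xat x m)%:~R * w ^+ (k.-1 * m)))) //.
  apply: eq_bigr => d _.
  rewrite (expr_mod _ wk) xat_mod intrM.
  rewrite mulrACA; congr (_ * _).
  by rewrite -exprD -addnA -{1}(mul1n m) -mulnDl add1n prednK // exprD exprM wk expr1n mulr1.
rewrite (eq_bigr _ (fun (m : 'I_k) _ => step m (ltn_ord m))) /=.
rewrite exchange_big /=; apply: eq_bigr => d _.
by rewrite -big_distrl /= S2_rot // -rmorph_sum.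
Qed.
Section Trig.
Local Open Scope complex_scope.


Lemma cis_exp (R : realType) (t : R) n :
  (cos t +i* sin t) ^+ n = cos (n%:R * t) +i* sin (n%:R * t).
Proof.
elim: n => [|n IH]; first by rewrite expr0 mul0r cos0 sin0.
rewrite exprS IH -addn1 natrD mulrDl mul1r cosD sinD.
apply/eqP; rewrite eq_complex /=. 
apply/andP; split; apply/eqP; ring.
Qed.

Lemma omega_k (R : realType) k : (0 < k)%N -> omega R k ^+ k = 1.
Proof.
move=> k0; rewrite /omega cis_exp mulrC divfK ?pnatr_eq0 -?lt0n //.
by rewrite mulr_natl cos2pi sin2pi.
Qed.
End Trig.

Lemma fourier_poly (R : realType) x j :
  fourier R x j = (map_poly intr (\poly_(l < size x) xat x l)).[omega R (size x) ^+ j].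
Proof.
have -> : map_poly intr (\poly_(l < size x) xat x l) = \poly_(l < size x) ((xat x l)%:~R : R[i]).
  by apply/polyP => i; rewrite coef_map !coef_poly; case: ifP.
by rewrite horner_poly /fourier; apply: eq_bigr => l _; rewrite exprM.
Qed.

Lemma prim_roots (F : numFieldType) n (w w' : F) (P : {poly int}) :
  n.-primitive_root w -> n.-primitive_root w' ->
  root (map_poly intr P) w -> root (map_poly intr P) w'.
Proof.
move=> pw pw' Pw; have /dvdpP[q Dq] := @Phi_dvd F n w P pw Pw.
have := congr1 (map_poly (ratr : rat -> F)) Dq.
rewrite rmorphM /= !mapZQ => ->.
by rewrite rootM (@Phi_root F n) ?orbT.
Qed.

Lemma zero_transfer (R : realType) x j j' : (0 < size x)%N ->
  gcdn j (size x) = gcdn j' (size x) -> fourier R x j = 0 -> fourier R x j' = 0.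
Proof.
set k := size x => k0 gj; rewrite !fourier_poly -/k => /eqP Pj; apply/eqP.
have [d pd dk] := prim_order_exists k0 (omega_k R k k0).
have e i : gcdn i d = gcdn (gcdn i k) d by rewrite -gcdnA (gcdn_idPr dk).
move: (exp_prim_root pd j) (exp_prim_root pd j'); rewrite e gj -e => p1 p2.
exact: prim_roots p1 p2 Pj.
Qed.

Lemma prodF (R : realType) x j : (0 < size x)%N ->
  fourier R x j * fourier R x (j * (size x).-1) =
  \sum_(d < size x) (S2 x d 0)%:~R * (omega R (size x) ^+ j) ^+ d.
Proof.
move=> k0; rewrite -prod_corr; last by rewrite -exprM mulnC exprM omega_k // expr1n.
  congr (_ * _); rewrite /fourier; apply: eq_bigr => l _; by rewrite -!exprM ?mulnA.
done.
Qed.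

Theorem lemma3p5 (R : realType) (k : nat) (x y : seq int) :
  (1 <= k)%N -> size x = k -> size y = k ->
  (forall i1 i2 : nat, S2 x i1 i2 = S2 y i1 i2) ->
  forall alpha : nat, (1 <= alpha <= k)%N ->
    (forall j, j \in Galpha k alpha ->
       fourier R x j != 0 /\ fourier R y j != 0)
    \/
    (forall j, j \in Galpha k alpha ->
       fourier R x j = 0 /\ fourier R y j = 0).
Proof.
move=> k0 sx sy S alpha _.
have A j : fourier R x j * fourier R x (j * k.-1) = fourier R y j * fourier R y (j * k.-1).
  have := prodF R x j; have := prodF R y j; rewrite sx sy => -> // -> //.
  by apply: eq_bigr => d _; rewrite S.
have Gk j : gcdn (j * k.-1) k = gcdn j k.
  by rewrite [gcdn (j * _) k]gcdnC Gauss_gcdl; [exact: gcdnC | exact: coprimenP].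
have H (a b : seq int) : size a = k -> size b = k ->
    (forall j, fourier R a j * fourier R a (j * k.-1) = fourier R b j * fourier R b (j * k.-1)) ->
    forall j0 j, gcdn j0 k = gcdn j k -> fourier R a j0 = 0 ->
    fourier R a j = 0 /\ fourier R b j = 0.
  move=> sa sb Ab j0 j g0 a0.
  have aj : fourier R a j = 0 by apply: zero_transfer a0; rewrite ?sa.
  split=> //.
  have /esym/eqP := Ab j; rewrite aj mul0r mulf_eq0 => /orP[/eqP //|/eqP b1].
  by apply: zero_transfer b1; rewrite ?sb // Gk.
have mG j : j \in Galpha k alpha -> gcdn j k = alpha.
  by rewrite /Galpha mem_filter => /andP[/eqP].
case E: (has (fun j => (fourier R x j == 0) || (fourier R y j == 0)) (Galpha k alpha)).
  right; case/hasP: E => j0 j0G /orP[/eqP x0|/eqP y0] j jG.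
    by apply: H x0 => //; rewrite !mG.
  have [] := H y x sy sx (fun j => esym (A j)) j0 j _ y0; first by rewrite !mG.
  by move=> -> ->.
left=> j jG; move/negbT/hasPn: E => /(_ j jG).
by rewrite negb_or => /andP[].
Qed.
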